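(* Let $n\ge 2$. For every $c>0$ the quintuple $\big((z(n)+1)c,\;k(n)c,\;c,\;(z(n)+1)c,\;(k(n)+1)c\big)$ belongs to $\mathcal{C}$, and $$G\big((z(n)+1)c,k(n)c,c,(z(n)+1)c,(k(n)+1)c\big)=\widetilde G(n):=\frac{4}{(k(n)+1)^2}\Big(1+\frac{1}{z(n)}\Big).$$ In particular $\sup_{(a,b,c,d,\theta)\in\mathcal{C}}G(a,b,c,d,\theta)\ge \widetilde G(n)$.
   Context: A quintuple $(a,b,c,d,\theta)$ is admissible if $d\ge a>c>0$, $\theta>b\ge 0$, and $(a-c)^2\theta^2-a(\theta-b)\big[(2\theta+na)(a-c)+a(n-1)(\theta-b)\big]\ge 0$; $\mathcal{C}$ is the set of admissible quintuples. For $(a,b,c,d,\theta)\in\mathcal{C}$, $G=\min\{G_1,G_2\}$ with $G_1=\frac{4d(\theta-b)}{\theta^2}$ and $G_2$ the unique positive root $x$ of $(d-a)\theta^2x^2+(d-c)\theta^2x-4cd(\theta-b)=0$. Further, $k(n)=3\sqrt{n}\cos\big(\tfrac13\arccos(1/\sqrt n)\big)$ and $z(n)=\dfrac{k(n)^2-3n+\sqrt{k(n)^4-6nk(n)^2-6nk(n)}}{3n}$. *)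

(* Defs.v *)
From Stdlib Require Import Reals Lra Lia ClassicalEpsilon.
Open Scope R_scope.

Definition admissible (n : nat) (a b c d th : R) : Prop :=
  d >= a /\ a > c /\ c > 0 /\ th > b /\ b >= 0 /\
  (a - c)^2 * th^2
    - a * (th - b) * ((2 * th + INR n * a) * (a - c) + a * (INR n - 1) * (th - b))
  >= 0.

Definition G1 (a b c d th : R) : R := 4 * d * (th - b) / th^2.

Definition G2poly (a b c d th x : R) : R :=
  (d - a) * th^2 * x^2 + (d - c) * th^2 * x - 4 * c * d * (th - b).

(* G2 := the (unique, on C) positive root x of G2poly, chosen by Hilbert's epsilon. *)
Definition G2 (a b c d th : R) : R :=
  epsilon (inhabits 0) (fun x => 0 < x /\ G2poly a b c d th x = 0).

Definition G (a b c d th : R) : R := Rmin (G1 a b c d th) (G2 a b c d th).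

Definition kn (n : nat) : R :=
  3 * sqrt (INR n) * cos (acos (1 / sqrt (INR n)) / 3).

Definition zn (n : nat) : R :=
  (kn n ^ 2 - 3 * INR n
    + sqrt (kn n ^ 4 - 6 * INR n * kn n ^ 2 - 6 * INR n * kn n)) / (3 * INR n).

Definition Gtilde (n : nat) : R :=
  4 / (kn n + 1)^2 * (1 + 1 / zn n).

(* Main.v *)
Require Import Defs.
From Stdlib Require Import Reals Lra Psatz ClassicalEpsilon.
Open Scope R_scope.

Lemma cos3 x : cos (3 * x) = 4 * cos x ^ 3 - 3 * cos x.
Proof.
  replace (3 * x) with (2 * x + x) by ring.
  rewrite cos_plus, cos_2a, sin_2a.
  assert (Hs : sin x * sin x = 1 - cos x * cos x) by (pose proof (sin2_cos2 x) as Hsc; unfold Rsqr in Hsc; lra).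
  replace ((cos x * cos x - sin x * sin x) * cos x - 2 * sin x * cos x * sin x)
    with ((cos x * cos x - sin x * sin x) * cos x - 2 * (sin x * sin x) * cos x) by ring.
  rewrite Hs. ring.
Qed.

Lemma kn_facts n : (2 <= n)%nat -> 0 < kn n /\ 4 * kn n ^ 3 = 27 * INR n * (kn n + 1).
Proof.
  intros hn.
  assert (HN : 2 <= INR n) by (replace 2 with (INR 2) by (simpl; ring); apply le_INR; lia).
  set (r := sqrt (INR n)).
  assert (Hr2 : r * r = INR n) by (apply sqrt_sqrt; lra).
  assert (Hr : 0 < r) by (apply sqrt_lt_R0; lra).
  assert (Hr1 : 1 < r) by nra.
  assert (Hb : -1 <= 1 / r <= 1).
  { split; unfold Rdiv; rewrite Rmult_1_l.
    - assert (0 < / r) by (apply Rinv_0_lt_compat; lra). lra.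
    - rewrite <- Rinv_1. apply Rinv_le_contravar; lra. }
  pose proof (acos_bound (1 / r)) as [A1 A2].
  set (al := acos (1 / r) / 3).
  assert (Hc3 : 4 * cos al ^ 3 - 3 * cos al = 1 / r).
  { rewrite <- cos3. unfold al. replace (3 * (acos (1 / r) / 3)) with (acos (1/r)) by field.
    apply cos_acos; auto. }
  assert (Ht : 0 < cos al).
  { apply cos_gt_0; unfold al; pose proof PI_RGT_0; lra. }
  unfold kn. fold r. fold al.
  split.
  - apply Rmult_lt_0_compat; lra.
  - assert (E : r * (4 * cos al ^ 3 - 3 * cos al) = 1).
    { rewrite Hc3. field. lra. }
    rewrite <- Hr2.
    replace (4 * (3 * r * cos al) ^ 3) with (27 * (r * r) * (r * (4 * cos al ^ 3))) by ring.
    nra.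
Qed.

Lemma zn_eq n : (2 <= n)%nat -> zn n = (2 * kn n + 3) / kn n.
Proof.
  intros hn. destruct (kn_facts n hn) as [Hk Hc].
  assert (HN : 2 <= INR n) by (replace 2 with (INR 2) by (simpl; ring); apply le_INR; lia).
  unfold zn. set (k := kn n) in *. set (N := INR n) in *.
  assert (D : k ^ 4 - 6 * N * k ^ 2 - 6 * N * k = (k^2/3) * (k^2/3)) by nra.
  rewrite D, sqrt_square by nra.
  field_simplify_eq; [nra | lra].
Qed.

Theorem proposition1p6 (n : nat) (hn : (2 <= n)%nat) :
  (forall c : R, 0 < c ->
     admissible n ((zn n + 1) * c) (kn n * c) c ((zn n + 1) * c) ((kn n + 1) * c) /\
     G ((zn n + 1) * c) (kn n * c) c ((zn n + 1) * c) ((kn n + 1) * c) = Gtilde n) /\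
  (forall u : R,
     (forall a b c d th : R, admissible n a b c d th -> G a b c d th <= u) ->
     Gtilde n <= u).
Proof.
  destruct (kn_facts n hn) as [Hk Hc].
  pose proof (zn_eq n hn) as Hz.
  assert (HN : 2 <= INR n) by (replace 2 with (INR 2) by (simpl; ring); apply le_INR; lia).
  assert (HNe : INR n = 4 * kn n ^ 3 / (27 * (kn n + 1))) by (field_simplify_eq; lra).
  assert (main : forall c : R, 0 < c ->
     admissible n ((zn n + 1) * c) (kn n * c) c ((zn n + 1) * c) ((kn n + 1) * c) /\
     G ((zn n + 1) * c) (kn n * c) c ((zn n + 1) * c) ((kn n + 1) * c) = Gtilde n).
  { intros c hc.
    unfold Gtilde. rewrite Hz.
    set (k := kn n) in *.
    assert (Hz1 : 1 <= (2 * k + 3) / k).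
    { apply (Rmult_le_reg_r k); [lra|]. field_simplify; lra. }
    assert (Hzp : 0 < (2 * k + 3) / k) by lra.
    split.
    - unfold admissible. rewrite HNe.
      split; [lra|]. split; [nra|]. split; [lra|]. split; [nra|]. split; [nra|].
      right. field. lra.
    - unfold G.
      assert (HG2 : G2 (((2 * k + 3) / k + 1) * c) (k * c) c (((2 * k + 3) / k + 1) * c) ((k + 1) * c)
                    = 4 / (k + 1) ^ 2 * (1 + 1 / ((2 * k + 3) / k))).
      { unfold G2.
        set (P := fun x => 0 < x /\ G2poly (((2 * k + 3) / k + 1) * c) (k * c) c (((2 * k + 3) / k + 1) * c) ((k + 1) * c) x = 0).
        assert (ex : exists x, P x).
        { exists (4 / (k + 1) ^ 2 * (1 + 1 / ((2 * k + 3) / k))). unfold P, G2poly. split.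
          - apply Rmult_lt_0_compat.
            + apply Rdiv_lt_0_compat; [lra| apply pow_lt; lra].
            + assert (0 < 1 / ((2 * k + 3) / k)) by (apply Rdiv_lt_0_compat; lra). lra.
          - field. split; lra. }
        destruct (epsilon_spec (inhabits 0) P ex) as [_ E].
        revert E. set (x := epsilon _ P). unfold G2poly. intros E.
        assert (E' : ((2 * k + 3) / k * c) * ((k + 1) * c) ^ 2 * x
                     = 4 * c * (((2 * k + 3) / k + 1) * c) * c) by lra.
        apply (Rmult_eq_reg_l (((2 * k + 3) / k * c) * ((k + 1) * c) ^ 2)).
        + rewrite E'. field. split; lra.
        + apply Rmult_integral_contrapositive; split; [nra | apply pow_nonzero; nra]. }
      rewrite HG2. unfold Rmin. destruct (Rle_dec _ _) as [h|h]; [|reflexivity].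
      apply Rle_antisym; [exact h|].
      unfold G1.
      apply (Rmult_le_reg_r ((k+1)^2)); [apply pow_lt; lra|].
      field_simplify; try lra.
      apply (Rmult_le_reg_r (2*k+3)); [lra|]. field_simplify; try lra. replace ((24 * k ^ 2 * c + 60 * k * c + 36 * c) / (k * c)) with (24 * k + 60 + 36 / k) by (field; split; lra). assert (0 < 36 / k) by (apply Rdiv_lt_0_compat; lra). lra. }
  split; [exact main|].
  intros u hu. destruct (main 1 Rlt_0_1) as [Ha Hg]. rewrite <- Hg. apply hu. exact Ha.
Qed.
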